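(* Let $ABC$ be a triangle with incenter $I$ and orthocenter $H$, and let $H_A, H_B, H_C$ be the orthocenters of the triangles $BIC$, $CIA$, $AIB$ respectively. Let $O_A, O_B, O_C$ be the circumcenters of the triangles $AH_BH_C$, $BH_CH_A$, $CH_AH_B$ respectively. Then $H$ is the orthocenter of triangle $O_AO_BO_C$, and $I$ is the Euler reflection point of triangle $O_AO_BO_C$.
   Context: The Euler reflection point of a (non-equilateral) triangle is the common point of the reflections of its Euler line in the three sidelines of the triangle. *)

(* Defs.v *)
From HB Require Import structures.
From mathcomp Require Import all_boot all_order all_algebra.
Set Implicit Arguments. Unset Strict Implicit. Unset Printing Implicit Defensive.
Import Order.TTheory GRing.Theory Num.Theory.
Local Open Scope ring_scope.

Section Geometry.
Variable R : rcfType.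
Definition point := (R * R)%type.

Definition padd (P Q : point) : point := (P.1 + Q.1, P.2 + Q.2).
Definition psub (P Q : point) : point := (P.1 - Q.1, P.2 - Q.2).
Definition pscale (k : R) (P : point) : point := (k * P.1, k * P.2).
Definition dot (u v : point) : R := u.1 * v.1 + u.2 * v.2.
Definition cross (u v : point) : R := u.1 * v.2 - u.2 * v.1.
Definition dist2 (P Q : point) : R := dot (psub P Q) (psub P Q).
Definition dist (P Q : point) : R := Num.sqrt (dist2 P Q).

Definition collinear (P Q X : point) : Prop := cross (psub Q P) (psub X P) = 0.

Definition triangle (A B C : point) : Prop := ~ collinear A B C.

Definition dist_line (X P Q : point) : R :=
  `|cross (psub Q P) (psub X P)| / dist P Q.

Definition strictly_inside (X A B C : point) : Prop :=
  exists a b c : R, [/\ 0 < a, 0 < b, 0 < c, a + b + c = 1 &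
     X = padd (pscale a A) (padd (pscale b B) (pscale c C))].

Definition is_incenter (A B C I : point) : Prop :=
  triangle A B C /\ strictly_inside I A B C /\
  dist_line I B C = dist_line I C A /\ dist_line I C A = dist_line I A B.

Definition is_orthocenter (A B C H : point) : Prop :=
  [/\ dot (psub H A) (psub C B) = 0,
      dot (psub H B) (psub A C) = 0 &
      dot (psub H C) (psub B A) = 0].

Definition is_circumcenter (A B C O : point) : Prop :=
  dist2 O A = dist2 O B /\ dist2 O B = dist2 O C.

Definition centroid (A B C : point) : point :=
  pscale (3%:R^-1) (padd A (padd B C)).

Definition equilateral (A B C : point) : Prop :=
  dist2 A B = dist2 B C /\ dist2 B C = dist2 C A.

Definition reflect_line (P Q X : point) : point :=
  let t := dot (psub X P) (psub Q P) / dist2 Q P in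
  psub (pscale 2%:R (padd P (pscale t (psub Q P)))) X.

Definition on_reflected_line (P Q O G X : point) : Prop :=
  collinear (reflect_line P Q O) (reflect_line P Q G) X.

(* X is the Euler reflection point of the non-equilateral triangle ABC:
   the common point of the reflections of the Euler line (line through the
   circumcenter and the centroid) in the three sidelines. *)
Definition euler_reflection_point (A B C X : point) : Prop :=
  [/\ triangle A B C, ~ equilateral A B C &
      forall O, is_circumcenter A B C O ->
        [/\ on_reflected_line B C O (centroid A B C) X,
            on_reflected_line C A O (centroid A B C) X &
            on_reflected_line A B O (centroid A B C) X]].
End Geometry.

(* Main.v *)
Require Import Defs.
From mathcomp Require Import all_boot all_order all_algebra ring lra.
Import Order.TTheory GRing.Theory Num.Theory.
Local Open Scope ring_scope.
Set Implicit Arguments. Unset Strict Implicit.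


Section G.
Variable R : rcfType.
Implicit Types P Q Z W X Y U V : point R.

Lemma lin0 (d u v : point R) : dot d u = 0 -> dot d v = 0 -> cross u v != 0 -> d = (0,0).
Proof.
case: d u v => [d1 d2] [u1 u2] [v1 v2]; rewrite /dot /cross /= => h1 h2 hc.
have e1 : d1 * (u1 * v2 - u2 * v1) = 0.
  have -> : d1 * (u1 * v2 - u2 * v1) = (d1 * u1 + d2 * u2) * v2 - (d1 * v1 + d2 * v2) * u2 by ring.
  by rewrite h1 h2; ring.
have e2 : d2 * (u1 * v2 - u2 * v1) = 0.
  have -> : d2 * (u1 * v2 - u2 * v1) = (d1 * v1 + d2 * v2) * u1 - (d1 * u1 + d2 * u2) * v1 by ring.
  by rewrite h1 h2; ring.
move/eqP: e1; move/eqP: e2; rewrite !mulf_eq0 (negbTE hc) !orbF => /eqP-> /eqP-> //.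
Qed.

Lemma psub_eq0 (W W' : point R) : psub W W' = (0,0) -> W = W'.
Proof.
case: W W' => [w1 w2] [v1 v2]; rewrite /psub /= => -[/eqP + /eqP].
by rewrite !subr_eq0 => /eqP -> /eqP ->.
Qed.

Lemma ortho_uniq P Q Z W W' : is_orthocenter P Q Z W -> is_orthocenter P Q Z W' ->
  cross (psub Z Q) (psub P Z) != 0 -> W = W'.
Proof.
case=> h1 h2 _ [h1' h2' _] hc.
apply: psub_eq0; apply: (@lin0 _ _ _ _ _ hc); clear hc.
- move: h1 h1'; clear h2 h2'; case: W W' P Q Z => [w1 w2] [v1 v2] [p1 p2] [q1 q2] [z1 z2].
  rewrite /dot /psub /= => h1 h1'.
  have -> : (w1 - v1) * (z1 - q1) + (w2 - v2) * (z2 - q2) =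
     ((w1 - p1) * (z1 - q1) + (w2 - p2) * (z2 - q2)) - ((v1 - p1) * (z1 - q1) + (v2 - p2) * (z2 - q2)) by ring.
  by rewrite h1 h1' subrr.
- move: h2 h2'; clear h1 h1'; case: W W' P Q Z => [w1 w2] [v1 v2] [p1 p2] [q1 q2] [z1 z2].
  rewrite /dot /psub /= => h1 h1'.
  have -> : (w1 - v1) * (p1 - z1) + (w2 - v2) * (p2 - z2) =
     ((w1 - q1) * (p1 - z1) + (w2 - q2) * (p2 - z2)) - ((v1 - q1) * (p1 - z1) + (v2 - q2) * (p2 - z2)) by ring.
  by rewrite h1 h1' subrr.
Qed.

Lemma circ_uniq P Q Z W W' : is_circumcenter P Q Z W -> is_circumcenter P Q Z W' ->
  cross (psub Q P) (psub Z P) != 0 -> W = W'.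
Proof.
case=> h1 h2 [h1' h2'] hc.
have h3 := etrans h1 h2; have h3' := etrans h1' h2'.
apply: psub_eq0; apply: (@lin0 _ _ _ _ _ hc); clear hc.
- move: h1 h1'; clear h2 h2' h3 h3'; case: W W' P Q Z => [w1 w2] [v1 v2] [p1 p2] [q1 q2] [z1 z2].
  rewrite /dist2 /dot /psub /= => h1 h1'.
  suff e : ((w1 - v1) * (q1 - p1) + (w2 - v2) * (q2 - p2)) * 2 = 0.
    by move/eqP: e; rewrite mulf_eq0 pnatr_eq0 orbF => /eqP.
  have -> : ((w1 - v1) * (q1 - p1) + (w2 - v2) * (q2 - p2)) * 2 =
   (((w1 - p1) * (w1 - p1) + (w2 - p2) * (w2 - p2)) - ((w1 - q1) * (w1 - q1) + (w2 - q2) * (w2 - q2)))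
   - (((v1 - p1) * (v1 - p1) + (v2 - p2) * (v2 - p2)) - ((v1 - q1) * (v1 - q1) + (v2 - q2) * (v2 - q2))) by ring.
  by rewrite h1 h1' !subrr.
- move: h3 h3'; clear h1 h1' h2 h2'; case: W W' P Q Z => [w1 w2] [v1 v2] [p1 p2] [q1 q2] [z1 z2].
  rewrite /dist2 /dot /psub /= => h1 h1'.
  suff e : ((w1 - v1) * (z1 - p1) + (w2 - v2) * (z2 - p2)) * 2 = 0.
    by move/eqP: e; rewrite mulf_eq0 pnatr_eq0 orbF => /eqP.
  have -> : ((w1 - v1) * (z1 - p1) + (w2 - v2) * (z2 - p2)) * 2 =
   (((w1 - p1) * (w1 - p1) + (w2 - p2) * (w2 - p2)) - ((w1 - z1) * (w1 - z1) + (w2 - z2) * (w2 - z2)))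
   - (((v1 - p1) * (v1 - p1) + (v2 - p2) * (v2 - p2)) - ((v1 - z1) * (v1 - z1) + (v2 - z2) * (v2 - z2))) by ring.
  by rewrite h1 h1' !subrr.
Qed.
End G.

Section C.
Variable R : rcfType.

Lemma tangent_lin (t x y : R) : x != 1 ->
  cross (psub (x,y) (1,t)) (psub (0,0) (1,t)) ^+ 2 = dist2 (1,t) (x,y) ->
  t^+2 * (x + 1) - 2 * t * y - x + 1 = 0.
Proof.
move=> hx; rewrite /cross /dist2 /dot /psub /= => e.
have : (x - 1) * (t^+2 * (x + 1) - 2 * t * y - x + 1) = 0.
  have -> : (x - 1) * (t^+2 * (x + 1) - 2 * t * y - x + 1) =
    ((x - 1) * (0 - t) - (y - t) * (0 - 1)) ^+ 2 - ((1 - x) * (1 - x) + (t - y) * (t - y)) by ring.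
  by rewrite e subrr.
by move/eqP; rewrite mulf_eq0 subr_eq0 (negbTE hx) /= => /eqP.
Qed.

Lemma tangent_lin' (t x y : R) : x != 1 ->
  cross (psub (1,t) (x,y)) (psub (0,0) (x,y)) ^+ 2 = dist2 (x,y) (1,t) ->
  t^+2 * (x + 1) - 2 * t * y - x + 1 = 0.
Proof.
move=> hx e; apply: tangent_lin hx _; move: e.
rewrite /cross /dist2 /dot /psub /= => e.
have -> : ((x - 1) * (0 - t) - (y - t) * (0 - 1)) ^+ 2 = ((1 - x) * (0 - y) - (t - y) * (0 - x)) ^+ 2 by ring.
by rewrite e; ring.
Qed.

Lemma solveA (t2 t3 x y : R) : t2 != t3 ->
  t2^+2 * (x + 1) - 2 * t2 * y - x + 1 = 0 ->
  t3^+2 * (x + 1) - 2 * t3 * y - x + 1 = 0 ->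
  1 + t2 * t3 != 0 /\ (x, y) = ((1 - t2 * t3) / (1 + t2 * t3), (t2 + t3) / (1 + t2 * t3)).
Proof.
move=> h23 e2 e3.
have h23' : t2 - t3 != 0 by rewrite subr_eq0.
have ex : (t2 - t3) * (x * (1 + t2 * t3) - (1 - t2 * t3)) = 0.
  have -> : (t2 - t3) * (x * (1 + t2 * t3) - (1 - t2 * t3)) =
    t3 * (t2^+2 * (x + 1) - 2 * t2 * y - x + 1) - t2 * (t3^+2 * (x + 1) - 2 * t3 * y - x + 1) by ring.
  by rewrite e2 e3; ring.
have ey : (t2 - t3) * (2 * y - (t2 + t3) * (x + 1)) = 0.
  have -> : (t2 - t3) * (2 * y - (t2 + t3) * (x + 1)) =
    - ((t2^+2 * (x + 1) - 2 * t2 * y - x + 1) - (t3^+2 * (x + 1) - 2 * t3 * y - x + 1)) by ring.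
  by rewrite e2 e3; ring.
move/eqP: ex; rewrite mulf_eq0 (negbTE h23') /= subr_eq0 => /eqP ex.
move/eqP: ey; rewrite mulf_eq0 (negbTE h23') /= subr_eq0 => /eqP ey.
have hk : 1 + t2 * t3 != 0.
  apply/eqP => hk; move: ex; rewrite hk mulr0 => h.
  have e : (1 + t2 * t3) + (1 - t2 * t3) = 2 by ring.
  by move: e; rewrite hk -h addr0 => /eqP; rewrite eq_sym pnatr_eq0.
have hx : x = (1 - t2 * t3) / (1 + t2 * t3) by rewrite -ex; field.
split => //; congr pair => //.
apply: (@mulIf _ 2); first by rewrite pnatr_eq0.
by rewrite mulrC ey hx; field.
Qed.
End C.

Section K.
Variable R : rcfType.

Lemma neq0_eq (a b : R) : a = b -> b != 0 -> a != 0.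
Proof. by move=> ->. Qed.

Lemma core (t2 t3 x y : R) (H HA HB HC OA OB OC : point R) :
  ~ collinear (x,y) (1,t3) (1,t2) ->
  cross (psub (x,y) (1,t2)) (psub (0,0) (1,t2)) ^+ 2 = dist2 (1,t2) (x,y) ->
  cross (psub (1,t3) (x,y)) (psub (0,0) (x,y)) ^+ 2 = dist2 (x,y) (1,t3) ->
  is_orthocenter (x,y) (1,t3) (1,t2) H ->
  is_orthocenter (1,t3) (0,0) (1,t2) HA ->
  is_orthocenter (1,t2) (0,0) (x,y) HB ->
  is_orthocenter (x,y) (0,0) (1,t3) HC ->
  triangle (x,y) HB HC -> triangle (1,t3) HC HA -> triangle (1,t2) HA HB ->
  is_circumcenter (x,y) HB HC OA -> is_circumcenter (1,t3) HC HA OB ->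
  is_circumcenter (1,t2) HA HB OC ->
  is_orthocenter OA OB OC H /\ (~ equilateral OA OB OC -> euler_reflection_point OA OB OC (0,0)).
Proof.
move=> tri tC tB hH hHA hHB hHC tA' tB' tC' cA cB cC.
move/eqP: tri; rewrite /cross /psub /= => tri.
have h23 : t2 != t3.
  by apply: contra tri => /eqP ->; apply/eqP; ring.
have hx1 : x != 1.
  by apply: contra tri => /eqP ->; apply/eqP; ring.
have [hk hA] := solveA h23 (tangent_lin hx1 tC) (tangent_lin' hx1 tB).
case: hA => hx hy; subst x y; clear tC tB hx1.
have htri : (1 - (1 - t2 * t3) / (1 + t2 * t3)) * (t2 - (t2 + t3) / (1 + t2 * t3)) - (t3 - (t2 + t3) / (1 + t2 * t3)) * (1 - (1 - t2 * t3) / (1 + t2 * t3))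
   = 2 * t2 * t3 * (t2 - t3) / (1 + t2 * t3).
  by field.
rewrite htri in tri.
have h2 : t2 != 0 by apply: contraNneq tri => ->; rewrite !(mul0r, mulr0).
have h3 : t3 != 0 by apply: contraNneq tri => ->; rewrite !(mul0r, mulr0).
have h23' : t2 - t3 != 0 by rewrite subr_eq0.
have p2 : 1 + t2 ^+ 2 != 0 by rewrite lt0r_neq0 //; nra.
have p3 : 1 + t3 ^+ 2 != 0 by rewrite lt0r_neq0 //; nra.
have eHA : HA = (1 + t2 * t3, 0).
  apply: (ortho_uniq hHA).
    by rewrite /is_orthocenter /dot /psub /=; split; ring.
  rewrite /cross /psub /=; apply: (@neq0_eq _ (t3 - t2)); first by ring.
  by rewrite subr_eq0 eq_sym.
have eHB : HB = ((1 - t2^+2) / (1 + t2 * t3), 2 * t2 / (1 + t2 * t3)).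
  apply: (ortho_uniq hHB).
    by rewrite /is_orthocenter /dot /psub /=; split; field.
  rewrite /cross /psub /=; apply: (@neq0_eq _ (- t3 * (1 + t2^+2) / (1 + t2 * t3))); first by field.
  by rewrite !mulf_neq0 ?invr_eq0 ?oppr_eq0.
have eHC : HC = ((1 - t3^+2) / (1 + t2 * t3), 2 * t3 / (1 + t2 * t3)).
  apply: (ortho_uniq hHC).
    by rewrite /is_orthocenter /dot /psub /=; split; field.
  rewrite /cross /psub /=; apply: (@neq0_eq _ (t2 * (1 + t3^+2) / (1 + t2 * t3))); first by field.
  by rewrite !mulf_neq0 ?invr_eq0.
subst HA HB HC.
have eH : H = ((t2^+2*t3^+2 - t2^+2 + 2*t2*t3 - t3^+2 + 3)/(2*(1+t2*t3)), (t2+t3) / (1+t2*t3)).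
  apply: (ortho_uniq hH).
    by rewrite /is_orthocenter /dot /psub /=; split; field.
  rewrite /cross /psub /=; apply: (@neq0_eq _ (2 * t2 * t3 * (t2 - t3) / (1 + t2 * t3))) => //.
  by field.
have eOA : OA = (- (t2+t3) * (t2+t3) / (2 * (1 + t2*t3)), (t2+t3) * (1 - t2 * t3) / (2 * (1+t2*t3))).
  apply: (circ_uniq cA).
    by rewrite /is_circumcenter /dist2 /dot /psub /=; split; field.
  by move/eqP: tA'.
have eOB : OB = (t3 * ((2 * t2 - t3 + t2 * t2 * t3) / (2 * (1+t2*t3))), - ((2 * t2 - t3 + t2 * t2 * t3) / (2 * (1+t2*t3)))).
  apply: (circ_uniq cB).
    by rewrite /is_circumcenter /dist2 /dot /psub /=; split; field.
  by move/eqP: tB'.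
have eOC : OC = (t2 * ((2 * t3 - t2 + t3 * t3 * t2) / (2 * (1+t2*t3))), - ((2 * t3 - t2 + t3 * t3 * t2) / (2 * (1+t2*t3)))).
  apply: (circ_uniq cC).
    by rewrite /is_circumcenter /dist2 /dot /psub /=; split; field.
  by move/eqP: tC'.
subst H OA OB OC.
split.
  by rewrite /is_orthocenter /dot /psub /=; split; field.
move=> neq.
have hQ : (t2 * t3 + 3)^+2 + (t2 + t3)^+2 != 0.
  apply/eqP => /eqP; rewrite paddr_eq0 ?sqr_ge0 // !sqrf_eq0 => /andP[/eqP e1 /eqP e2].
  have z2 : 2 * t2 - t3 + t2 * t2 * t3 = 0.
    have -> : 2 * t2 - t3 + t2 * t2 * t3 = t2 * (t2 * t3 + 3) - (t2 + t3) by ring.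
    by rewrite e1 e2; ring.
  have z3 : 2 * t3 - t2 + t3 * t3 * t2 = 0.
    have -> : 2 * t3 - t2 + t3 * t3 * t2 = t3 * (t2 * t3 + 3) - (t2 + t3) by ring.
    by rewrite e1 e2; ring.
  apply: neq; rewrite z2 z3 e2 /equilateral /dist2 /dot /psub /=; split; ring.
have tO : cross (psub (t3 * ((2 * t2 - t3 + t2 * t2 * t3) / (2 * (1+t2*t3))), - ((2 * t2 - t3 + t2 * t2 * t3) / (2 * (1+t2*t3))))
                      (- (t2+t3) * (t2+t3) / (2 * (1 + t2*t3)), (t2+t3) * (1 - t2 * t3) / (2 * (1+t2*t3))))
                (psub (t2 * ((2 * t3 - t2 + t3 * t3 * t2) / (2 * (1+t2*t3))), - ((2 * t3 - t2 + t3 * t3 * t2) / (2 * (1+t2*t3))))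
                      (- (t2+t3) * (t2+t3) / (2 * (1 + t2*t3)), (t2+t3) * (1 - t2 * t3) / (2 * (1+t2*t3)))) != 0.
  apply: (@neq0_eq _ ((t2 - t3) * t2 * t3 * ((t2 * t3 + 3)^+2 + (t2 + t3)^+2) / (4 * (1 + t2 * t3)^+2))).
    by rewrite /cross /psub /=; field.
  rewrite !mulf_neq0 // ?invr_eq0 ?mulf_neq0 ?expf_neq0 // ?pnatr_eq0 //.
split => //; first by move/eqP: tO.
move=> O cO.
have -> : O = ((t2^+2 * t3^+2 - t2^+2 - t3^+2 - 3) / (4 * (1 + t2 * t3)), - (t2 + t3) / 2).
  apply: (circ_uniq cO) => //.
  by rewrite /is_circumcenter /dist2 /dot /psub /=; split; field.
rewrite /on_reflected_line /collinear /reflect_line /centroid /cross /dot /psub /padd /pscale /dist2 /dot /psub /=.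
split.
- field; rewrite hk /=.
  apply: (@neq0_eq _ ((t2 - t3)^+2 * ((t2 * t3 + 3)^+2 + (t2 + t3)^+2))); first by ring.
  by rewrite mulf_neq0 ?expf_neq0.
- field; rewrite hk /=.
  apply: (@neq0_eq _ (t3^+2 * (1 + t2^+2) * ((t2 * t3 + 3)^+2 + (t2 + t3)^+2))); first by ring.
  by rewrite !mulf_neq0 ?expf_neq0.
- field; rewrite hk /=.
  apply: (@neq0_eq _ (t2^+2 * (1 + t3^+2) * ((t2 * t3 + 3)^+2 + (t2 + t3)^+2))); first by ring.
  by rewrite !mulf_neq0 ?expf_neq0.
Qed.

Lemma core' (t2 t3 : R) (A H HA HB HC OA OB OC : point R) :
  ~ collinear A (1,t3) (1,t2) ->
  cross (psub A (1,t2)) (psub (0,0) (1,t2)) ^+ 2 = dist2 (1,t2) A ->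
  cross (psub (1,t3) A) (psub (0,0) A) ^+ 2 = dist2 A (1,t3) ->
  is_orthocenter A (1,t3) (1,t2) H ->
  is_orthocenter (1,t3) (0,0) (1,t2) HA ->
  is_orthocenter (1,t2) (0,0) A HB ->
  is_orthocenter A (0,0) (1,t3) HC ->
  triangle A HB HC -> triangle (1,t3) HC HA -> triangle (1,t2) HA HB ->
  is_circumcenter A HB HC OA -> is_circumcenter (1,t3) HC HA OB ->
  is_circumcenter (1,t2) HA HB OC ->
  is_orthocenter OA OB OC H /\ (~ equilateral OA OB OC -> euler_reflection_point OA OB OC (0,0)).
Proof. case: A => x y; exact: core. Qed.
End K.

Section T.
Variable R : rcfType.
Variables (I w : point R).
Hypothesis hw : dot w w != 0.

Definition Tm (X : point R) : point R :=
  (dot w (psub X I) / dot w w, cross w (psub X I) / dot w w).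

Lemma Tm_dot X Y Z W :
  dot (psub (Tm X) (Tm Y)) (psub (Tm Z) (Tm W)) = dot (psub X Y) (psub Z W) / dot w w.
Proof. move: hw; rewrite /Tm /dot /cross /psub /= => hw'; field; exact: hw'. Qed.

Lemma Tm_cross X Y Z W :
  cross (psub (Tm X) (Tm Y)) (psub (Tm Z) (Tm W)) = cross (psub X Y) (psub Z W) / dot w w.
Proof. move: hw; rewrite /Tm /dot /cross /psub /= => hw'; field; exact: hw'. Qed.

Lemma Tm_dist2 X Y : dist2 (Tm X) (Tm Y) = dist2 X Y / dot w w.
Proof. exact: Tm_dot. Qed.

Lemma div0E (a : R) : (a / dot w w = 0) <-> (a = 0).
Proof.
split=> [/eqP|->]; last by rewrite mul0r.
by rewrite mulf_eq0 invr_eq0 (negbTE hw) orbF => /eqP.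
Qed.

Lemma divE (a b : R) : (a / dot w w = b / dot w w) <-> (a = b).
Proof. by split=> [/(mulIf (invr_neq0 hw))|->]. Qed.

Lemma ortho_T A B C H : is_orthocenter (Tm A) (Tm B) (Tm C) (Tm H) <-> is_orthocenter A B C H.
Proof.
rewrite /is_orthocenter !Tm_dot; split.
  by case=> /div0E h1 /div0E h2 /div0E h3.
by case=> h1 h2 h3; split; apply/div0E.
Qed.

Lemma circ_T A B C O : is_circumcenter (Tm A) (Tm B) (Tm C) (Tm O) <-> is_circumcenter A B C O.
Proof.
rewrite /is_circumcenter !Tm_dist2; split.
  by case=> /divE h1 /divE h2.
by case=> h1 h2; split; apply/divE.
Qed.

Lemma coll_T A B C : collinear (Tm A) (Tm B) (Tm C) <-> collinear A B C.
Proof. rewrite /collinear Tm_cross; exact: div0E. Qed.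

Lemma tri_T A B C : triangle (Tm A) (Tm B) (Tm C) <-> triangle A B C.
Proof. by rewrite /triangle; split=> h /coll_T. Qed.

Lemma equi_T A B C : equilateral (Tm A) (Tm B) (Tm C) <-> equilateral A B C.
Proof.
rewrite /equilateral !Tm_dist2; split.
  by case=> /divE h1 /divE h2.
by case=> h1 h2; split; apply/divE.
Qed.

Lemma Tm_centroid A B C : Tm (centroid A B C) = centroid (Tm A) (Tm B) (Tm C).
Proof.
move: hw; rewrite /Tm /centroid /dot /cross /psub /padd /pscale /= => hw'.
congr pair; field; rewrite hw' //.
Qed.

Lemma Tm_reflect P Q X : dist2 Q P != 0 ->
  Tm (reflect_line P Q X) = reflect_line (Tm P) (Tm Q) (Tm X).
Proof.
move=> hd; rewrite /reflect_line Tm_dot Tm_dist2.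
have -> : dot (psub X P) (psub Q P) / dot w w / (dist2 Q P / dot w w) =
          dot (psub X P) (psub Q P) / dist2 Q P.
  by move: hw hd; move: (dot w w) (dist2 Q P) => a b ha hb; field; rewrite ha hb.
move: (dot (psub X P) (psub Q P) / dist2 Q P) => t.
move: hw; rewrite /Tm /dot /cross /psub /padd /pscale /= => hw'.
congr pair; field; rewrite ?hw' //.
Qed.

End T.

Section T2.
Variable R : rcfType.

Lemma dist2_eq0 (P Q : point R) : dist2 Q P = 0 -> Q = P.
Proof.
case: P Q => [p1 p2] [q1 q2]; rewrite /dist2 /dot /psub /= -!expr2 => /eqP.
rewrite paddr_eq0 ?sqr_ge0 // !sqrf_eq0 !subr_eq0 => /andP[/eqP-> /eqP->] //.
Qed.

Lemma dist2_ge0 (P Q : point R) : 0 <= dist2 P Q.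
Proof. by rewrite /dist2 /dot -!expr2 addr_ge0 ?sqr_ge0. Qed.

Lemma dist2C (P Q : point R) : dist2 P Q = dist2 Q P.
Proof. by rewrite /dist2 /dot /psub /=; ring. Qed.

Lemma tri_neq (A B C : point R) : triangle A B C ->
  [/\ dist2 C B != 0, dist2 A C != 0 & dist2 B A != 0].
Proof.
move=> tri; split; apply/eqP => /dist2_eq0 e; apply: tri; rewrite /collinear e;
  rewrite /cross /psub /=; ring.
Qed.

Lemma euler_T (I w : point R) (A B C X : point R) : dot w w != 0 ->
  euler_reflection_point (Tm I w A) (Tm I w B) (Tm I w C) (Tm I w X) ->
  euler_reflection_point A B C X.
Proof.
move=> hw [ht hne hO].
have tri : triangle A B C by apply/(tri_T I hw).
have [dCB dAC dBA] := tri_neq tri.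
split => //.
  by move=> he; apply: hne; apply/(equi_T I hw).
move=> O hc.
have [h1 h2 h3] := hO (Tm I w O) ((circ_T I hw _ _ _ _).2 hc).
move: h1 h2 h3; rewrite /on_reflected_line -Tm_centroid // -!Tm_reflect //.
by move=> /(coll_T I hw) h1 /(coll_T I hw) h2 /(coll_T I hw) h3.
Qed.

Lemma dl_sq (X P Q : point R) :
  dist_line X P Q ^+ 2 = cross (psub Q P) (psub X P) ^+ 2 / dist2 P Q.
Proof.
by rewrite /dist_line /dist expr_div_n real_normK ?num_real // sqr_sqrtr // dist2_ge0.
Qed.
End T2.
Unset Implicit Arguments.

Theorem corollary5p4 (R : rcfType) (A B C I H HA HB HC OA OB OC : point R) :
  is_incenter A B C I ->
  is_orthocenter A B C H ->
  is_orthocenter B I C HA ->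
  is_orthocenter C I A HB ->
  is_orthocenter A I B HC ->
  triangle A HB HC -> triangle B HC HA -> triangle C HA HB ->
  is_circumcenter A HB HC OA ->
  is_circumcenter B HC HA OB ->
  is_circumcenter C HA HB OC ->
  is_orthocenter OA OB OC H /\
  (~ equilateral OA OB OC -> euler_reflection_point OA OB OC I).
Proof.
move=> [tri [[a [b [c [ha hb hc habc hIdef]]]] [d1 d2]]] hH hHA hHB hHC tA tB tC cA cB cC.
have [dCB dAC dBA] := tri_neq tri.
have dBC : dist2 B C != 0 by rewrite dist2C.
have exx : cross (psub C B) (psub I B) = a * cross (psub C B) (psub A B).
  have hb' : b = 1 - a - c by rewrite -habc; ring.
  rewrite hIdef hb' /cross /psub /padd /pscale /=; ring.
have hcr : cross (psub C B) (psub A B) != 0.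
  move/eqP: tri => tri; apply: (neq0_eq _ tri).
  by rewrite /cross /psub /=; ring.
have hxx : cross (psub C B) (psub I B) != 0 by rewrite exx mulf_neq0 // lt0r_neq0.
pose w : point R := pscale (cross (psub C B) (psub I B) / dist2 B C) ((psub C B).2, - (psub C B).1).
have hw : dot w w = cross (psub C B) (psub I B) ^+ 2 / dist2 B C.
  move: dBC; rewrite /w /dist2 /cross /dot /pscale /psub /= => dBC'; field; exact: dBC'.
have hw0 : dot w w != 0 by rewrite hw mulf_neq0 ?expf_neq0 ?invr_eq0.
have eB : Tm I w B = (1, (Tm I w B).2).
  rewrite [LHS]surjective_pairing; congr pair; rewrite /Tm /= hw.
  move: dBC hxx; rewrite /w /dist2 /cross /dot /pscale /psub /= => h1 h2.
  field; rewrite ?h1 ?h2 //.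
have eC : Tm I w C = (1, (Tm I w C).2).
  rewrite [LHS]surjective_pairing; congr pair; rewrite /Tm /= hw.
  move: dBC hxx; rewrite /w /dist2 /cross /dot /pscale /psub /= => h1 h2.
  field; rewrite ?h1 ?h2 //.
have eI : Tm I w I = (0, 0).
  by rewrite /Tm /dot /cross /psub /= !subrr; congr pair; ring.
have dCA : dist2 C A != 0 by rewrite dist2C.
have dAB : dist2 A B != 0 by rewrite dist2C.
have eCA : cross (psub A C) (psub I C) ^+ 2 = dot w w * dist2 C A.
  have e : cross (psub A C) (psub I C) ^+ 2 / dist2 C A = dot w w.
    by rewrite hw -dl_sq -dl_sq d1.
  by rewrite -e; field.
have eAB : cross (psub B A) (psub I A) ^+ 2 = dot w w * dist2 A B.
  have e : cross (psub B A) (psub I A) ^+ 2 / dist2 A B = dot w w.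
    by rewrite hw -dl_sq -dl_sq d1 d2.
  by rewrite -e; field.
have := @core' R (Tm I w C).2 (Tm I w B).2 (Tm I w A) (Tm I w H) (Tm I w HA) (Tm I w HB)
  (Tm I w HC) (Tm I w OA) (Tm I w OB) (Tm I w OC).
rewrite -eB -eC -eI.
move=> [].
- by move=> /(coll_T I hw0).
- by rewrite (Tm_cross I hw0) (Tm_dist2 I hw0) expr_div_n eCA; field.
- by rewrite (Tm_cross I hw0) (Tm_dist2 I hw0) expr_div_n eAB; field.
- exact/(ortho_T I hw0).
- exact/(ortho_T I hw0).
- exact/(ortho_T I hw0).
- exact/(ortho_T I hw0).
- exact/(tri_T I hw0).
- exact/(tri_T I hw0).
- exact/(tri_T I hw0).
- exact/(circ_T I hw0).
- exact/(circ_T I hw0).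
- exact/(circ_T I hw0).
move=> /(ortho_T I hw0) ho he; split => // ne.
apply: (euler_T (I := I) (w := w) hw0); apply: he.
by move=> /(equi_T I hw0).
Qed.
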